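(* Let $p\ge1$, $U\ge1$, positive integers $n_1,\dots,n_U$ with $n=\sum_un_u$, symmetric matrices $G^{A,u}\in\mathbb{R}^{p\times p}$ ($u=1,\dots,U$), symmetric $G^{C,u}\in\mathbb{R}^{p\times p}$ for each $u$ with $n_u\ge2$, and $G^{D,uv}\in\mathbb{R}^{p\times p}$ for $u\ne v$ with $G^{D,vu}=(G^{D,uv})^T$. Let $G^s\in\mathbb{R}^{np\times np}$ be the block matrix with diagonal blocks $G^s_{\mathcal{V}_u}=G^{A,u}$ if $n_u=1$ and $G^s_{\mathcal{V}_u}=\mathbf{1}_{n_u}\mathbf{1}_{n_u}^T\otimes G^{C,u}+I_{n_u}\otimes(G^{A,u}-G^{C,u})$ if $n_u\ge2$, and off-diagonal blocks $G^s_{\mathcal{V}_u\mathcal{V}_v}=\mathbf{1}_{n_u}\mathbf{1}_{n_v}^T\otimes G^{D,uv}$ ($u\ne v$). Then $G^s\succeq0$ if and only if $G^{A,u}\succeq0$ for all $u$ with $n_u=1$, $G^{A,u}-G^{C,u}\succeq0$ for all $u$ with $n_u\ge2$, and $H\succeq0$, where $H\in\mathbb{R}^{Up\times Up}$ is the symmetric block matrix with blocks $H^{uu}=n_uG^{A,u}+n_u(n_u-1)G^{C,u}$ (with $G^{C,u}:=0$ when $n_u=1$) and $H^{uv}=n_un_vG^{D,uv}$ for $u\ne v$. *)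

(* Defs.v *)
From HB Require Import structures.
From mathcomp Require Import all_boot all_order all_algebra.
From mathcomp Require Export mxtens.
From mathcomp Require Import reals.
Set Implicit Arguments. Unset Strict Implicit. Unset Printing Implicit Defensive.
Import Order.TTheory GRing.Theory Num.Theory.
Local Open Scope ring_scope.

Definition psd (R : realType) (m : nat) (A : 'M[R]_m) : Prop :=
  forall x : 'cV[R]_m, 0 <= (x^T *m A *m x) 0 0.

Definition ones (R : realType) (m n : nat) : 'M[R]_(m, n) := const_mx 1.

Definition Gs_diag (R : realType) (p U : nat) (n : 'I_U -> nat)
  (GA GC : 'I_U -> 'M[R]_p) (u : 'I_U) : 'M[R]_(n u * p) :=
  if n u == 1%N then (1%:M : 'M[R]_(n u)) *t GA u   (* = G^{A,u} since n_u = 1 *)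
  else (ones R (n u) (n u)) *t GC u + (1%:M : 'M[R]_(n u)) *t (GA u - GC u).

Definition Gs (R : realType) (p U : nat) (n : 'I_U -> nat)
  (GA GC : 'I_U -> 'M[R]_p) (GD : 'I_U -> 'I_U -> 'M[R]_p)
  : 'M[R]_(\sum_(u < U) (n u * p)) :=
  \mxdiag_(u < U) Gs_diag n GA GC u
  + \mxblock_(u < U, v < U)
      (if u == v then 0 else (ones R (n u) (n v)) *t GD u v).

Definition Hmat (R : realType) (p U : nat) (n : 'I_U -> nat)
  (GA GC : 'I_U -> 'M[R]_p) (GD : 'I_U -> 'I_U -> 'M[R]_p)
  : 'M[R]_(\sum_(u < U) p) :=
  \mxblock_(u < U, v < U)
    (if u == v then
       (n u)%:R *: GA u + (n u * (n u).-1)%:R *: (if n u == 1%N then 0 else GC u)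
     else (n u * n v)%:R *: GD u v).

(* Main.v *)
Require Import Defs.
From HB Require Import structures.
From mathcomp Require Import all_boot all_order all_algebra.
From mathcomp Require Import mxtens reals.
From mathcomp Require Import ring lra.
Set Implicit Arguments. Unset Strict Implicit. Unset Printing Implicit Defensive.
Import Order.TTheory GRing.Theory Num.Theory.
Local Open Scope ring_scope.

Definition bf (R : realType) m n (A : 'M[R]_(m, n)) (x : 'cV[R]_m) (y : 'cV[R]_n) : R :=
  (x^T *m A *m y) 0 0.

Lemma bfDl (R : realType) m (A : 'M[R]_m) x1 x2 y :
  bf A (x1 + x2) y = bf A x1 y + bf A x2 y.
Proof. by rewrite /bf linearD /= !mulmxDl !mxE. Qed.
Lemma bfDr (R : realType) m (A : 'M[R]_m) x y1 y2 :
  bf A x (y1 + y2) = bf A x y1 + bf A x y2.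
Proof. by rewrite /bf !mulmxDr !mxE. Qed.
Lemma bfZl (R : realType) m (A : 'M[R]_m) (a : R) x y :
  bf A (a *: x) y = a * bf A x y.
Proof. by rewrite /bf linearZ /= -!scalemxAl !mxE. Qed.
Lemma bfZr (R : realType) m (A : 'M[R]_m) (a : R) x y :
  bf A x (a *: y) = a * bf A x y.
Proof. by rewrite /bf -!scalemxAr !mxE. Qed.
Lemma bf0l (R : realType) m (A : 'M[R]_m) y : bf A 0 y = 0.
Proof. by rewrite /bf trmx0 !mul0mx !mxE. Qed.
Lemma bf0r (R : realType) m (A : 'M[R]_m) x : bf A x 0 = 0.
Proof. by rewrite /bf mulmx0 !mxE. Qed.
Lemma bfNl (R : realType) m (A : 'M[R]_m) x y : bf A (- x) y = - bf A x y.
Proof. by rewrite -scaleN1r bfZl mulN1r. Qed.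
Lemma bfNr (R : realType) m (A : 'M[R]_m) x y : bf A x (- y) = - bf A x y.
Proof. by rewrite -scaleN1r bfZr mulN1r. Qed.
Lemma bfBl (R : realType) m (A : 'M[R]_m) x1 x2 y :
  bf A (x1 - x2) y = bf A x1 y - bf A x2 y.
Proof. by rewrite bfDl bfNl. Qed.
Lemma bfBr (R : realType) m (A : 'M[R]_m) x y1 y2 :
  bf A x (y1 - y2) = bf A x y1 - bf A x y2.
Proof. by rewrite bfDr bfNr. Qed.
Lemma bfMD (R : realType) m (A B : 'M[R]_m) x y :
  bf (A + B) x y = bf A x y + bf B x y.
Proof. by rewrite /bf mulmxDr mulmxDl !mxE. Qed.
Lemma bfMB (R : realType) m (A B : 'M[R]_m) x y :
  bf (A - B) x y = bf A x y - bf B x y.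
Proof. by rewrite /bf mulmxBr mulmxBl !mxE. Qed.
Lemma bfMZ (R : realType) m (A : 'M[R]_m) a x y :
  bf (a *: A) x y = a * bf A x y.
Proof. by rewrite /bf -scalemxAr -scalemxAl !mxE. Qed.
Lemma bfM0 (R : realType) m n (x : 'cV[R]_m) (y : 'cV[R]_n) : bf (0 : 'M_(m, n)) x y = 0.
Proof. by rewrite /bf mulmx0 mul0mx !mxE. Qed.
Lemma bf_suml (R : realType) m (A : 'M[R]_m) (I : finType) (P : pred I) (f : I -> 'cV_m) y :
  bf A (\sum_(i | P i) f i) y = \sum_(i | P i) bf A (f i) y.
Proof. exact: (big_morph (fun x => bf A x y) (fun a b => bfDl A a b y) (bf0l A y)). Qed.
Lemma bf_sumr (R : realType) m (A : 'M[R]_m) (I : finType) (P : pred I) (f : I -> 'cV_m) x :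
  bf A x (\sum_(i | P i) f i) = \sum_(i | P i) bf A x (f i).
Proof. exact: (big_morph (fun y => bf A x y) (fun a b => bfDr A x a b) (bf0r A x)). Qed.

Lemma bfE (R : realType) m m' (A : 'M[R]_(m, m')) x y :
  bf A x y = \sum_a \sum_b x a 0 * A a b * y b 0.
Proof.
rewrite /bf mxE exchange_big; apply: eq_bigr => b _.
rewrite mxE mulr_suml; apply: eq_bigr => a _; by rewrite !mxE.
Qed.

Definition piece (R : realType) m p (x : 'cV[R]_(m * p)) (i : 'I_m) : 'cV[R]_p :=
  \col_k x (mxtens_index (i, k)) 0.

Lemma sum_tens (R : realType) m p (F : 'I_(m * p) -> R) :
  \sum_a F a = \sum_(i < m) \sum_(k < p) F (mxtens_index (i, k)).
Proof.
rewrite pair_big /= (reindex (@mxtens_index m p)) //=.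
  by apply: eq_bigr => -[i k].
by exists (@mxtens_unindex m p) => z _; rewrite (mxtens_indexK, mxtens_unindexK).
Qed.

Lemma bf_tens (R : realType) m m' p (P : 'M[R]_(m, m')) (M : 'M[R]_p) x y :
  bf (P *t M) x y = \sum_i \sum_j P i j * bf M (piece x i) (piece y j).
Proof.
rewrite bfE sum_tens; apply: eq_bigr => i _.
under eq_bigr do rewrite sum_tens.
rewrite exchange_big; apply: eq_bigr => j _.
rewrite bfE mulr_sumr; apply: eq_bigr => k _.
rewrite mulr_sumr; apply: eq_bigr => l _.
rewrite tensmxE !mxE.
by ring.
Qed.

Lemma bf_block (R : realType) U (q : 'I_U -> nat) (B : forall u v, 'M[R]_(q u, q v))
  (x y : 'cV[R]_(\sum_u q u)) :
  bf (\mxblock_(u, v) B u v) x y =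
  \sum_u \sum_v bf (B u v) (submxcol x u) (submxcol y v).
Proof.
rewrite /bf -[in LHS](submxcolK x) -[in LHS](submxcolK y) tr_mxcol.
rewrite mul_mxrow_mxblock mul_mxrow_mxcol summxE exchange_big.
apply: eq_bigr => v _; rewrite mulmx_suml summxE; apply: eq_bigr => u _.
by [].
Qed.

Lemma bf_diag (R : realType) U (q : 'I_U -> nat) (D : forall u, 'M[R]_(q u))
  (x y : 'cV[R]_(\sum_u q u)) :
  bf (\mxdiag_u D u) x y =
  \sum_u bf (D u) (submxcol x u) (submxcol y u).
Proof.
rewrite /mxdiag bf_block; apply: eq_bigr => u _.
rewrite (bigD1 u) //= eqxx conform_mx_id big1 ?addr0 // => v /negPf; rewrite eq_sym => ->.
by rewrite bfM0.
Qed.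

Lemma sum_scalar1 (R : realType) k (f : 'I_k -> 'I_k -> R) :
  \sum_i \sum_j (1%:M : 'M[R]_k) i j * f i j = \sum_i f i i.
Proof.
apply: eq_bigr => i _; rewrite (bigD1 i) //= mxE eqxx mul1r big1 ?addr0 //.
by move=> j /negPf; rewrite mxE eq_sym => ->; rewrite mul0r.
Qed.

Lemma sum_ones (R : realType) a b p (M : 'M[R]_p) (X : 'I_a -> 'cV_p) (Y : 'I_b -> 'cV_p) :
  \sum_i \sum_j (ones R a b) i j * bf M (X i) (Y j) =
  bf M (\sum_i X i) (\sum_j Y j).
Proof.
rewrite bf_suml; apply: eq_bigr => i _; rewrite bf_sumr; apply: eq_bigr => j _.
by rewrite mxE mul1r.
Qed.

Definition Cp (R : realType) p U (n : 'I_U -> nat) (GC : 'I_U -> 'M[R]_p) u :=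
  if n u == 1%N then 0 else GC u.

Definition Xp (R : realType) p U (n : 'I_U -> nat) (x : 'cV[R]_(\sum_(u < U) (n u * p)))
  u (i : 'I_(n u)) : 'cV[R]_p := piece (submxcol x u) i.
Arguments Xp {R p U n} x u i.

Lemma Gs_form (R : realType) (p U : nat) (n : 'I_U -> nat)
  (GA GC : 'I_U -> 'M[R]_p) (GD : 'I_U -> 'I_U -> 'M[R]_p) x :
  bf (Gs n GA GC GD) x x =
  \sum_u (\sum_i bf (GA u - Cp n GC u) (Xp x u i) (Xp x u i)
          + bf (Cp n GC u) (\sum_i Xp x u i) (\sum_i Xp x u i))
  + \sum_u \sum_v (if u == v then 0 else
        bf (GD u v) (\sum_i Xp x u i) (\sum_i Xp x v i)).
Proof.
rewrite /Gs bfMD bf_diag bf_block; congr (_ + _).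
  apply: eq_bigr => u _; rewrite /Gs_diag /Cp /Xp; case: eqP => h.
    by rewrite bf_tens sum_scalar1 bfM0 addr0; under [RHS]eq_bigr do rewrite subr0.
  by rewrite bfMD !bf_tens sum_scalar1 sum_ones addrC.
apply: eq_bigr => u _; apply: eq_bigr => v _; case: eqP => _; first by rewrite bfM0.
by rewrite bf_tens sum_ones.
Qed.

Lemma sum_split (R : realType) (I : finType) (f : I -> I -> R) :
  \sum_u \sum_v f u v = \sum_u f u u + \sum_u \sum_v (if u == v then 0 else f u v).
Proof.
rewrite -big_split; apply: eq_bigr => u _ /=.
rewrite (bigD1 u) //= [in X in _ = _ + X](bigD1 u) //= eqxx add0r; congr (_ + _).
by apply: eq_bigr => v /negPf; rewrite eq_sym => ->.
Qed.

Lemma Sz (R : realType) p k (S : 'cV[R]_p) : (0 < k)%N ->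
  S = k%:R *: (k%:R^-1 *: S).
Proof.
by move=> hk; rewrite scalerA mulfV ?scale1r // pnatr_eq0 -lt0n.
Qed.

Lemma per_u (R : realType) p k (A C : 'M[R]_p) (X : 'I_k -> 'cV[R]_p) :
  (0 < k)%N ->
  \sum_i bf (A - C) (X i) (X i) + bf C (\sum_i X i) (\sum_i X i) =
  \sum_i bf (A - C) (X i - k%:R^-1 *: \sum_i X i) (X i - k%:R^-1 *: \sum_i X i)
  + bf (k%:R *: A + (k * k.-1)%:R *: C) (k%:R^-1 *: \sum_i X i) (k%:R^-1 *: \sum_i X i).
Proof.
move=> hk; set z := k%:R^-1 *: \sum_i X i.
have hS : \sum_i X i = k%:R *: z by exact: Sz.
under [in RHS]eq_bigr do rewrite bfBl !bfBr.
rewrite !sumrB -bf_suml -(bf_sumr (A - C) _ X) sumr_const card_ord.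
rewrite hS !bfZl !bfZr !bfMB !bfMD !bfMZ.
rewrite natrM -subn1 natrB // -mulr_natr.
ring.
Qed.

Lemma bf_block_col (R : realType) U (q : 'I_U -> nat) (B : forall u v, 'M[R]_(q u, q v))
  (z : forall u, 'cV[R]_(q u)) :
  bf (\mxblock_(u, v) B u v) (\mxcol_u z u) (\mxcol_u z u) =
  \sum_u \sum_v bf (B u v) (z u) (z v).
Proof.
by rewrite bf_block; apply: eq_bigr => u _; apply: eq_bigr => v _; rewrite !mxcolK.
Qed.

Definition zf (R : realType) p U (n : 'I_U -> nat) (x : 'cV[R]_(\sum_(u < U) (n u * p))) u
  : 'cV[R]_p := (n u)%:R^-1 *: \sum_i Xp x u i.
Arguments zf {R p U n} x u.

Lemma key (R : realType) (p U : nat) (n : 'I_U -> nat)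
  (GA GC : 'I_U -> 'M[R]_p) (GD : 'I_U -> 'I_U -> 'M[R]_p) x :
  (forall u, (0 < n u)%N) ->
  bf (Gs n GA GC GD) x x =
  \sum_u \sum_i bf (GA u - Cp n GC u) (Xp x u i - zf x u) (Xp x u i - zf x u)
  + bf (Hmat n GA GC GD) (\mxcol_u zf x u) (\mxcol_u zf x u).
Proof.
move=> hn; rewrite Gs_form /Hmat bf_block_col.
rewrite sum_split addrA; congr (_ + _); first rewrite -big_split /=.
  apply: eq_bigr => u _; rewrite eqxx per_u //.
apply: eq_bigr => u _; apply: eq_bigr => v _; case: eqP => // _.
rewrite {1}(Sz (\sum_i Xp x u i) (hn u)) {1}(Sz (\sum_i Xp x v i) (hn v)).
by rewrite bfZl bfZr bfMZ natrM mulrA.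
Qed.

Definition build (R : realType) p U (n : 'I_U -> nat) (F : forall u, 'I_(n u) -> 'cV[R]_p)
  : 'cV[R]_(\sum_(u < U) (n u * p)) :=
  \mxcol_u (\col_k F u (mxtens_unindex k).1 (mxtens_unindex k).2 0).

Lemma Xp_build (R : realType) p U (n : 'I_U -> nat) (F : forall u, 'I_(n u) -> 'cV[R]_p) u i :
  Xp (build F) u i = F u i.
Proof.
rewrite /Xp /piece /build mxcolK; apply/matrixP => k j.
by rewrite !mxE mxtens_indexK [j]ord1.
Qed.

Lemma sum2_single (R : realType) (I : finType) (u : I) (f : I -> I -> R) :
  (forall v w, (v != u) || (w != u) -> f v w = 0) ->
  \sum_v \sum_w f v w = f u u.
Proof.
move=> h; rewrite (bigD1 u) //= [X in _ + X]big1 ?addr0; last first.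
  by move=> v hv; rewrite big1 // => w _; apply: h; rewrite hv.
by rewrite (bigD1 u) //= big1 ?addr0 // => w hw; apply: h; rewrite hw orbT.
Qed.

Lemma sum_first2 (V : zmodType) k (g : nat -> V) : (2 <= k)%N ->
  (forall i, (2 <= i)%N -> g i = 0) ->
  \sum_(i < k) g i = g 0%N + g 1%N.
Proof.
move=> hk hg; rewrite -(big_mkord xpredT g).
case: k hk => // -[|k] // _.
rewrite !big_nat_recl // big1 ?addr0 ?addrA // => i _.
exact: hg.
Qed.

Lemma zf_build (R : realType) p U (n : 'I_U -> nat) (F : forall u, 'I_(n u) -> 'cV[R]_p) u :
  zf (build F) u = (n u)%:R^-1 *: \sum_i F u i.
Proof. by rewrite /zf; under eq_bigr do rewrite Xp_build. Qed.

Unset Implicit Arguments.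
Theorem lemma5 (R : realType) (p U : nat) (n : 'I_U -> nat)
  (GA GC : 'I_U -> 'M[R]_p) (GD : 'I_U -> 'I_U -> 'M[R]_p) :
  (1 <= p)%N -> (1 <= U)%N ->
  (forall u, (1 <= n u)%N) ->
  (forall u, (GA u)^T = GA u) ->
  (forall u, (2 <= n u)%N -> (GC u)^T = GC u) ->
  (forall u v, u != v -> GD v u = (GD u v)^T) ->
  psd (Gs n GA GC GD) <->
  [/\ (forall u, n u = 1%N -> psd (GA u)),
      (forall u, (2 <= n u)%N -> psd (GA u - GC u)) &
      psd (Hmat n GA GC GD)].
Proof.
move=> _ _ hn _ _ _; split.
  move=> hG.
  have hH : psd (Hmat n GA GC GD).
    move=> z; change (0 <= bf (Hmat n GA GC GD) z z).
    pose F : forall v, 'I_(n v) -> 'cV[R]_p := fun v _ => @submxcol R U (fun _ => p) 1%N z v.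
    have : 0 <= bf (Gs n GA GC GD) (build F) (build F) := hG (build F).
    rewrite key //.
    have hz u : zf (build F) u = submxcol z u.
      rewrite zf_build sumr_const card_ord -scaler_nat scalerA mulVf ?scale1r //.
      by rewrite pnatr_eq0 -lt0n.
    under eq_bigr do under eq_bigr do rewrite hz Xp_build subrr bf0l.
    rewrite big1 ?add0r; last by move=> u _; rewrite big1.
    suff -> : \mxcol_u zf (build F) u = z by [].
    by rewrite -[RHS]submxcolK; apply/eq_mxcol => u; rewrite hz.
  split => //.
    move=> u h1 w; change (0 <= bf (GA u) w w).
    pose z : 'cV[R]_(\sum_(v < U) p) := \mxcol_v (if v == u then w else 0).
    have : 0 <= bf (Hmat n GA GC GD) z z := hH z.
    rewrite /Hmat bf_block_col (@sum2_single _ _ u); last first.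
      move=> v v' /orP[] /negPf ->; first by rewrite bf0l.
      by rewrite bf0r.
    by rewrite !eqxx h1 muln0 scale0r addr0 scale1r.
  move=> u h2 w; change (0 <= bf (GA u - GC u) w w).
  pose g (i : nat) : 'cV[R]_p := if i == 0%N then w else if i == 1%N then - w else 0.
  pose F : forall v, 'I_(n v) -> 'cV[R]_p := fun v i => if v == u then g (val i) else 0.
  have : 0 <= bf (Gs n GA GC GD) (build F) (build F) := hG (build F).
  rewrite key //.
  have hg i : (2 <= i)%N -> g i = 0.
    by rewrite /g; case: eqP => [->|_] //; case: eqP => [->|_].
  have hz v : zf (build F) v = 0.
    rewrite zf_build /F; case: eqP => hv.
      subst v; by rewrite (@sum_first2 _ (n u) g) // /g /= addrN scaler0.
    by rewrite big1 ?scaler0.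
  under eq_bigr do under eq_bigr do rewrite hz Xp_build subr0.
  rewrite /Hmat bf_block_col.
  under [X in _ + X]eq_bigr do under eq_bigr do rewrite !hz bf0l.
  rewrite [X in _ + X]big1 ?addr0; last by move=> v _; rewrite big1.
  rewrite (bigD1 u) //= [X in _ + X]big1 ?addr0; last first.
    by move=> v /negPf hv; rewrite big1 // => i _; rewrite /F hv bf0l.
  rewrite /F eqxx.
  have -> : \sum_(i < n u) bf (GA u - Cp n GC u) (g i) (g i) =
     bf (GA u - Cp n GC u) (g 0%N) (g 0%N) + bf (GA u - Cp n GC u) (g 1%N) (g 1%N).
    apply: (@sum_first2 _ (n u) (fun i => bf (GA u - Cp n GC u) (g i) (g i))) => // i hi.
    by rewrite hg ?bf0l.
  rewrite /g /= bfNl bfNr opprK /Cp.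
  have -> : (n u == 1%N) = false by apply/negP => /eqP h; rewrite h in h2.
  by rewrite -mulr2n pmulrn_lge0.
move=> [h1 h2 hH] x; change (0 <= bf (Gs n GA GC GD) x x).
rewrite key //; apply: addr_ge0; last exact: hH.
apply: sumr_ge0 => u _; apply: sumr_ge0 => i _; rewrite /Cp.
case: eqP => h.
  by rewrite subr0; apply: h1.
by apply: h2; case: (n u) (hn u) h => // -[|k].
Qed.
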